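(* Let $k,\ell\ge1$ and $\vec x=(x_1,\dots,x_k)$, $\vec y=(y_1,\dots,y_\ell)$ be distinct commuting formal variables. Then: (1) for $\sigma\in\Sigma_k$, $\tau\in\Sigma_\ell$ and $(r,\alpha,\beta)\in\tilde{\mathfrak S}$, $\Phi_{r,\alpha,\beta}(\sigma(\vec x),\tau(\vec y))=\Phi_{r,\alpha\circ\sigma^{-1},\beta\circ\tau^{-1}}(\vec x,\vec y)$; (2) distinct triples in $\tilde{\mathfrak S}$ give distinct vectors $\Phi_{r,\alpha,\beta}(\vec x,\vec y)$; (3) $\tilde{\mathfrak S}=\{(r,\alpha\circ\sigma,\beta\circ\tau):(r,\alpha,\beta)\in\mathfrak S,\sigma\in\Sigma_k,\tau\in\Sigma_\ell\}$; this gives natural actions of $\Sigma_k\times\Sigma_\ell$ on $\tilde{\mathfrak S}$ and on $\{\Phi_{r,\alpha,\beta}(\vec x,\vec y):(r,\alpha,\beta)\in\tilde{\mathfrak S}\}$ (via $(\sigma,\tau)\cdot\Phi_{r,\alpha,\beta}(\vec x,\vec y)=\Phi_{r,\alpha,\beta}(\sigma(\vec x),\tau(\vec y))$), and the latter action is free; (4) for fixed $r_0$ with $\max(k,\ell)\le r_0\le k+\ell$ and $\tilde{\mathfrak S}_{r_0}=\{(r,\alpha,\beta)\in\tilde{\mathfrak S}:r=r_0\}$, every $\pi\in\Sigma_{r_0}$ satisfies $\pi(\Phi_{r_0,\alpha,\beta}(\vec x,\vec y))=\Phi_{r_0,\pi^{-1}\circ\alpha,\pi^{-1}\circ\beta}(\vec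 x,\vec y)$, giving a natural action of $\Sigma_{r_0}$ on $\tilde{\mathfrak S}_{r_0}$, and this action is free; (5) for $(r,\alpha,\beta)\in\tilde{\mathfrak S}$ with $\Phi_{r,\alpha,\beta}(\vec x,\vec y)=(z_1,\dots,z_r)$ and $1\le r'\le r''\le r$, put $\vec r^\sharp=(r',r'+1,\dots,r'')$, $\vec z^\sharp=(z_{r'},\dots,z_{r''})$, $\vec k^\sharp=\alpha^{-1}(\vec r^\sharp)$, $\vec\ell^\sharp=\beta^{-1}(\vec r^\sharp)$, with $\vec x^\sharp,\vec y^\sharp$ the corresponding subvectors of $\vec x,\vec y$; then $\vec z^\sharp=\Phi_{r^\sharp,\alpha|_{\vec k^\sharp},\beta|_{\vec\ell^\sharp}}(\vec x^\sharp,\vec y^\sharp)$.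
   Context: $[n]=\{1,\dots,n\}$. $\mathfrak S$ is the set of triples $(r,\alpha,\beta)$ with $\max(k,\ell)\le r\le k+\ell$, $\alpha:[k]\to[r]$, $\beta:[\ell]\to[r]$ order-preserving injections with $\mathrm{im}\,\alpha\cup\mathrm{im}\,\beta=[r]$; $\tilde{\mathfrak S}$ is defined the same way but with $\alpha,\beta$ arbitrary injections. For such a triple, $\Phi_{r,\alpha,\beta}(\vec x,\vec y)=(x_{\alpha^{-1}(1)}y_{\beta^{-1}(1)},\dots,x_{\alpha^{-1}(r)}y_{\beta^{-1}(r)})$ with the convention $x_\emptyset=y_\emptyset=1$ (so the $u$-th entry is $x_i$, $y_j$ or the formal product $x_iy_j$). For $\sigma\in\Sigma_k$, $\sigma(\vec x)=(x_{\sigma(1)},\dots,x_{\sigma(k)})$, and for $\pi\in\Sigma_{r}$ acting on a vector $(z_1,\dots,z_r)$, $\pi(\vec z)=(z_{\pi(1)},\dots,z_{\pi(r)})$. For subvectors $\vec k^\sharp,\vec\ell^\sharp,\vec r^\sharp=(r_{i_1},\dots,r_{i_{p}})$ of $[k],[\ell],[r]$ with $\alpha(\vec k^\sharp)\cup\beta(\vec\ell^\sharp)=\vec r^\sharp$, $\Phi_{r^\sharp,\alpha|_{\vec k^\sharp},\beta|_{\vec\ell^\sharp}}(\vec x^\sharp,\vec y^\sharp)=(x_{\alpha^{-1}(r_{i_1})}y_{\beta^{-1}(r_{i_1})},\dots,x_{\alpha^{-1}(r_{i_p})}y_{\beta^{-1}(r_{i_p})})$. *)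

(* Defs.v *)
(* Indices [n] = {1..n} are modelled by 'I_n = {0..n-1}. *)
From HB Require Import structures.
From mathcomp Require Import all_boot all_order all_algebra all_fingroup.
From mathcomp Require Import mpoly.
Set Implicit Arguments. Unset Strict Implicit. Unset Printing Implicit Defensive.

Definition triple (k l : nat) :=
  {r : nat & ({ffun 'I_k -> 'I_r} * {ffun 'I_l -> 'I_r})%type}.

Definition mkT k l r (a : 'I_k -> 'I_r) (b : 'I_l -> 'I_r) : triple k l :=
  existT (fun r => ({ffun 'I_k -> 'I_r} * {ffun 'I_l -> 'I_r})%type) r
         ([ffun i => a i], [ffun j => b j]).

Definition valid k l r (a : 'I_k -> 'I_r) (b : 'I_l -> 'I_r) : Prop :=
  [/\ maxn k l <= r <= k + l, injective a, injective b &
      forall u : 'I_r, (exists i, a i = u) \/ (exists j, b j = u)].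

Definition Stilde k l (t : triple k l) : Prop :=
  valid (tagged t).1 (tagged t).2.

Definition Sfrak k l (t : triple k l) : Prop :=
  [/\ Stilde t, {homo (tagged t).1 : i j / (i < j)%N >-> (i < j)%N} &
      {homo (tagged t).2 : i j / (i < j)%N >-> (i < j)%N}].

(* x_{o} with the convention x_emptyset = 1 *)
Definition optv (R : ringType) (I : finType) (x : I -> R) (o : option I) : R :=
  if o is Some i then x i else 1%R.

(* Phi_{r,alpha,beta}(x,y) as a vector 'I_r -> R ; alpha^{-1}(u) is the
   (unique, by injectivity) preimage if it exists *)
Definition PhiF (R : comRingType) k l r (a : 'I_k -> 'I_r) (b : 'I_l -> 'I_r)
  (x : 'I_k -> R) (y : 'I_l -> R) : 'I_r -> R :=
  fun u => (optv x [pick i | a i == u] * optv y [pick j | b j == u])%R.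

Definition PhiT (R : comRingType) k l (t : triple k l)
  (x : 'I_k -> R) (y : 'I_l -> R) : seq R :=
  [seq PhiF (tagged t).1 (tagged t).2 x y u | u <- enum 'I_(tag t)].

Definition actT k l (t : triple k l) (s : 'S_k) (tau : 'S_l) : triple k l :=
  mkT (fun i => (tagged t).1 ((s^-1)%g i)) (fun j => (tagged t).2 ((tau^-1)%g j)).

Definition optsub (R : ringType) (I : finType) (ks : seq I) (xs : seq R)
  (o : option I) : R :=
  if o is Some i then nth 1%R xs (index i ks) else 1%R.

Definition PhiSub (R : comRingType) k l r (rs : seq 'I_r) (ks : seq 'I_k)
  (ls : seq 'I_l) (a : 'I_k -> 'I_r) (b : 'I_l -> 'I_r) (xs ys : seq R) : seq R :=
  [seq (optsub ks xs [pick i | (i \in ks) && (a i == u)] *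
        optsub ls ys [pick j | (j \in ls) && (b j == u)])%R | u <- rs].

Definition Xv k l (i : 'I_k) : {mpoly int[k + l]} := 'X_(lshift l i).
Definition Yv k l (j : 'I_l) : {mpoly int[k + l]} := 'X_(rshift k j).
Arguments Xv k l i : clear implicits.
Arguments Yv k l j : clear implicits.

(* Main.v *)
Require Import Defs.
From HB Require Import structures.
From mathcomp Require Import all_boot all_order all_algebra all_fingroup.
From mathcomp Require Import mpoly.
From Stdlib Require Import Eqdep_dec.
From mathcomp Require Import zify.
Set Implicit Arguments. Unset Strict Implicit. Unset Printing Implicit Defensive.
Import GRing.Theory.

Section H.
Variables k l : nat.

Definition om1 (o : option 'I_k) : 'X_{1..k+l} :=
  if o is Some i then U_(lshift l i)%MM else 0%MM.
Definition om2 (o : option 'I_l) : 'X_{1..k+l} :=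
  if o is Some j then U_(rshift k j)%MM else 0%MM.

Lemma optvX o : optv (Xv k l) o = 'X_[om1 o].
Proof. by case: o => [i|] //=; rewrite mpolyX0. Qed.
Lemma optvY o : optv (Yv k l) o = 'X_[om2 o].
Proof. by case: o => [i|] //=; rewrite mpolyX0. Qed.

Lemma MX o1 o2 : (optv (Xv k l) o1 * optv (Yv k l) o2)%R = 'X_[om1 o1 + om2 o2].
Proof. by rewrite optvX optvY mpolyXD. Qed.

Lemma mpolyX_injZ (m1 m2 : 'X_{1..k+l}) :
  'X_[m1] = 'X_[m2] :> {mpoly int[k+l]} -> m1 = m2.
Proof.
move=> h; have := congr1 (fun p : {mpoly int[k+l]} => mcoeff m1 p) h.
rewrite !mcoeffX eqxx; case: eqP => // _ /eqP; by rewrite oner_eq0.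
Qed.

Lemma om1L o i : om1 o (lshift l i) = (o == Some i).
Proof. case: o => [a|] /=; last by rewrite mnm0E. by rewrite mnm1E (inj_eq (@lshift_inj _ _)). Qed.
Lemma om2L o i : om2 o (lshift l i) = 0%N.
Proof. case: o => [a|] /=; last by rewrite mnm0E. by rewrite mnm1E eq_rlshift. Qed.
Lemma om1R o j : om1 o (rshift k j) = 0%N.
Proof. case: o => [a|] /=; last by rewrite mnm0E. by rewrite mnm1E eq_lrshift. Qed.
Lemma om2R o j : om2 o (rshift k j) = (o == Some j).
Proof. case: o => [a|] /=; last by rewrite mnm0E. by rewrite mnm1E (inj_eq (@rshift_inj _ _)). Qed.

Lemma opt_ext (T : finType) (o o' : option T) :
  (forall i, (o == Some i) = (o' == Some i)) -> o = o'.
Proof.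
case: o => [a|] h; case: o' h => [b|] h //.
- by have := h a; rewrite eqxx => /esym/eqP.
- by have := h a; rewrite eqxx.
- by have := h b; rewrite eqxx.
Qed.

Lemma om_inj o1 o2 o1' o2' :
  (optv (Xv k l) o1 * optv (Yv k l) o2)%R = (optv (Xv k l) o1' * optv (Yv k l) o2')%R ->
  o1 = o1' /\ o2 = o2'.
Proof.
rewrite !MX => /mpolyX_injZ /mnmP h; split; apply: opt_ext.
  by move=> i; have := h (lshift l i); rewrite !mnmDE !om1L !om2L !addn0; do 2 case: (_ == _).
by move=> i; have := h (rshift k i); rewrite !mnmDE !om1R !om2R !add0n; do 2 case: (_ == _).
Qed.

End H.

Lemma optv_comp (R : ringType) (I : finType) (x : I -> R) (s : I -> I) o :
  optv (fun i => x (s i)) o = optv x (omap s o).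
Proof. by case: o. Qed.

Lemma pick_inj (T : finType) r (f : T -> 'I_r) (inj : injective f) u i :
  f i = u -> [pick j | f j == u] = Some i.
Proof.
move=> fi; case: pickP => [j /eqP fj|/(_ i)]; last by rewrite fi eqxx.
by congr Some; apply: inj; rewrite fi fj.
Qed.

Lemma pick_some (T : finType) r (f : T -> 'I_r) u i :
  [pick j | f j == u] = Some i -> f i = u.
Proof. by case: pickP => // j /eqP h [<-]. Qed.

Lemma optv_perm (R : ringType) k r (a : 'I_k -> 'I_r) (inj : injective a)
   (s : 'S_k) (x : 'I_k -> R) u :
  optv (fun i => x (s i)) [pick i | a i == u] =
  optv x [pick i | a ((s^-1)%g i) == u].
Proof.
case: pickP => [i0 /eqP h|hn] /=.
  by rewrite (@pick_inj _ _ (fun i => a ((s^-1)%g i)) _ u (s i0)) //= ?permK //;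
     move=> p q /inj /(congr1 s); rewrite !permKV.
case: pickP => [i1 /eqP h|] //=.
by have := hn ((s^-1)%g i1); rewrite h eqxx.
Qed.

Section Rank.
Variables (k r : nat) (f : 'I_k -> 'I_r) (finj : injective f).

Definition rk i := #|[pred j | (f j < f i)%N]|.

Lemma rk_lt i : (rk i < k)%N.
Proof.
have := cardC [pred j | (f j < f i)%N]; rewrite card_ord.
have : (0 < #|predC [pred j | (f j < f i)%N]|)%N.
  by apply/card_gt0P; exists i; rewrite !inE ltnn.
move=> H1 H2; apply: (@leq_trans (#|[pred j | (f j < f i)%N]| + #|predC [pred j | (f j < f i)%N]|)); first by rewrite /rk -addn1 leq_add2l. by rewrite H2.
Qed.

Lemma rk_mono p q : (f p < f q)%N -> (rk p < rk q)%N.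
Proof.
move=> hpq; have : [predU1 p & [pred j | (f j < f p)%N]] \subset [pred j | (f j < f q)%N].
  apply/subsetP => j; rewrite !inE => /orP [/eqP -> //|h]; exact: ltn_trans h hpq.
move/subset_leq_card; rewrite cardU1 !inE ltnn /rk /=.
by rewrite add1n.
Qed.

Lemma rk_inj : injective (fun i => Ordinal (rk_lt i)).
Proof.
move=> p q [] h; case: (ltngtP (f p) (f q)) => [/rk_mono|/rk_mono|/val_inj/finj //];
  by rewrite h ltnn.
Qed.

Definition rkp : 'S_k := perm rk_inj.

Lemma sort_perm : exists (a : 'I_k -> 'I_r) (s : 'S_k),
  {homo a : i j / (i < j)%N >-> (i < j)%N} /\ forall i, a (s i) = f i.
Proof.
exists (fun i => f ((rkp^-1)%g i)), rkp; split; last by move=> i; rewrite permK.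
move=> i j hij; set p := (rkp^-1)%g i; set q := (rkp^-1)%g j.
have ep : rk p = i by rewrite -[i](permKV rkp) /rkp permE.
have eq : rk q = j by rewrite -[j](permKV rkp) /rkp permE.
case: (ltngtP (f p) (f q)) => // [/rk_mono|/val_inj/finj hpq].
  by rewrite ep eq => /(ltn_trans hij); rewrite ltnn.
by move: hij; rewrite -ep -eq hpq ltnn.
Qed.
End Rank.

Theorem lemma6p2 (k l : nat) (hk : (0 < k)%N) (hl : (0 < l)%N) :
  (* (1) *)
  (forall (s : 'S_k) (tau : 'S_l) (r : nat) (a : 'I_k -> 'I_r) (b : 'I_l -> 'I_r),
      valid a b ->
      forall u : 'I_r,
        PhiF a b (fun i => Xv k l (s i)) (fun j => Yv k l (tau j)) u =
        PhiF (fun i => a ((s^-1)%g i)) (fun j => b ((tau^-1)%g j))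
             (Xv k l) (Yv k l) u)
  /\
  (* (2) *)
  (forall t1 t2 : triple k l, Stilde t1 -> Stilde t2 -> t1 <> t2 ->
      PhiT t1 (Xv k l) (Yv k l) <> PhiT t2 (Xv k l) (Yv k l))
  /\
  (* (3) *)
  ((forall t : triple k l,
      Stilde t <-> exists (r : nat) (a : 'I_k -> 'I_r) (b : 'I_l -> 'I_r)
                          (s : 'S_k) (tau : 'S_l),
          Sfrak (mkT a b) /\ t = mkT (fun i => a (s i)) (fun j => b (tau j)))
   /\ (forall (t : triple k l) (s : 'S_k) (tau : 'S_l),
         Stilde t -> Stilde (actT t s tau))
   /\ (forall (t : triple k l) (s : 'S_k) (tau : 'S_l), Stilde t ->
         exists t' : triple k l, Stilde t' /\
           PhiT t (fun i => Xv k l (s i)) (fun j => Yv k l (tau j)) =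
           PhiT t' (Xv k l) (Yv k l))
   /\ (forall (t : triple k l) (s : 'S_k) (tau : 'S_l), Stilde t ->
         PhiT t (fun i => Xv k l (s i)) (fun j => Yv k l (tau j)) =
         PhiT t (Xv k l) (Yv k l) -> s = 1%g /\ tau = 1%g))
  /\
  (* (4) *)
  (forall r0 : nat, (maxn k l <= r0 <= k + l)%N ->
     forall (p : 'S_r0) (a : 'I_k -> 'I_r0) (b : 'I_l -> 'I_r0), valid a b ->
       [/\ forall u : 'I_r0,
             PhiF a b (Xv k l) (Yv k l) (p u) =
             PhiF (fun i => (p^-1)%g (a i)) (fun j => (p^-1)%g (b j))
                  (Xv k l) (Yv k l) u,
           valid (fun i => (p^-1)%g (a i)) (fun j => (p^-1)%g (b j)) &
           mkT (fun i => (p^-1)%g (a i)) (fun j => (p^-1)%g (b j)) = mkT a b ->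
             p = 1%g])
  /\
  (* (5) *)
  (forall (r : nat) (a : 'I_k -> 'I_r) (b : 'I_l -> 'I_r), valid a b ->
     forall r1 r2 : nat, (r1 <= r2 < r)%N ->
       let rs := [seq u : 'I_r <- enum 'I_r | (r1 <= u <= r2)%N] in
       let ks := pmap (fun u => [pick i | a i == u]) rs in
       let ls := pmap (fun u => [pick j | b j == u]) rs in
       [seq PhiF a b (Xv k l) (Yv k l) u | u <- rs] =
       PhiSub rs ks ls a b (map (Xv k l) ks) (map (Yv k l) ls)).
Proof.
have P1 : forall (s : 'S_k) (tau : 'S_l) (r : nat) (a : 'I_k -> 'I_r) (b : 'I_l -> 'I_r),
      valid a b ->
      forall u : 'I_r,
        PhiF a b (fun i => Xv k l (s i)) (fun j => Yv k l (tau j)) u =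
        PhiF (fun i => a ((s^-1)%g i)) (fun j => b ((tau^-1)%g j))
             (Xv k l) (Yv k l) u.
  move=> s tau r a b [_ ia ib _] u; rewrite /PhiF.
  by rewrite (optv_perm ia) (optv_perm ib).
split; first exact: P1.
split.
  move=> [r1 [A1 B1]] [r2 [A2 B2]] [_ iA1 iB1 _] _ hne heq; apply: hne.
  move: heq; rewrite /PhiT => heq.
  have er : r1 = r2 by have := congr1 size heq; rewrite !size_map -(enumT (ordinal r1)) -(enumT (ordinal r2)) !size_enum_ord.
  subst r2; move/eq_in_map: heq => heq.
  have hp u : [pick i | A1 i == u] = [pick i | A2 i == u] /\ [pick j | B1 j == u] = [pick j | B2 j == u].
    by apply: om_inj; exact: (heq u (mem_enum _ u)).
  congr existT; congr pair; apply/ffunP.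
    move=> i; apply/esym/(@pick_some _ _ A2); rewrite -(hp (A1 i)).1.
    exact: pick_inj.
  move=> j; apply/esym/(@pick_some _ _ B2); rewrite -(hp (B1 j)).2.
  exact: pick_inj.
have Sact : forall (t : triple k l) (s : 'S_k) (tau : 'S_l),
         Stilde t -> Stilde (actT t s tau).
  move=> [r [A B]] s tau [hr iA iB cov]; rewrite /Stilde /actT /mkT /=.
  split => //.
  - by move=> i j; rewrite !ffunE => /iA /perm_inj.
  - by move=> i j; rewrite !ffunE => /iB /perm_inj.
  move=> u; case: (cov u) => [[i hi]|[j hj]]; [left; exists (s i)|right; exists (tau j)];
    by rewrite ffunE permK.
have PhiAct : forall (t : triple k l) (s : 'S_k) (tau : 'S_l), Stilde t ->
   PhiT t (fun i => Xv k l (s i)) (fun j => Yv k l (tau j)) =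
   PhiT (actT t s tau) (Xv k l) (Yv k l).
  move=> [r [A B]] s tau hv; rewrite /PhiT /actT /mkT.
  apply/eq_in_map => u _; rewrite (P1 s tau _ _ _ hv) /PhiF.
  by congr (_ * _)%R; congr optv; apply: eq_pick => x; rewrite ffunE.
split.
  split.
    move=> t; split.
      case: t => r [A B] [hr iA iB cov].
      have [a [s [ha es]]] := sort_perm iA.
      have [b [tau [hb et]]] := sort_perm iB.
      exists r, a, b, s, tau; split; last first.
        by congr existT; congr pair; apply/ffunP => i; rewrite !ffunE.
      rewrite /Sfrak /Stilde /mkT /=; split; last 2 first.
      - by move=> i j; rewrite !ffunE; exact: ha.
      - by move=> i j; rewrite !ffunE; exact: hb.
      split => //.
      - move=> i j; rewrite !ffunE -[i](permKV s) -[j](permKV s) !es.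
        by move/iA/perm_inj => ->.
      - move=> i j; rewrite !ffunE -[i](permKV tau) -[j](permKV tau) !et.
        by move/iB/perm_inj => ->.
      move=> u; case: (cov u) => [[i hi]|[j hj]]; [left; exists (s i)|right; exists (tau j)];
        by rewrite ffunE ?es ?et.
    move=> [r [a [b [s [tau [[[hr iA iB cov] _ _] ->]]]]]].
    rewrite /Stilde /mkT /=; split => //.
    - move=> i j; rewrite !ffunE => h; apply: (perm_inj (s := s)); apply: iA.
      by rewrite !ffunE.
    - move=> i j; rewrite !ffunE => h; apply: (perm_inj (s := tau)); apply: iB.
      by rewrite !ffunE.
    move=> u; case: (cov u) => [[i hi]|[j hj]]; [left; exists ((s^-1)%g i)|right; exists ((tau^-1)%g j)];
      by rewrite !ffunE permKV -?hi -?hj ffunE.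
  split; first exact: Sact.
  split.
    by move=> t s tau hv; exists (actT t s tau); split; [exact: Sact|exact: PhiAct].
  move=> [r [A B]] s tau [hr iA iB cov]; rewrite /PhiT => /eq_in_map heq.
  have hp u : omap s [pick i | A i == u] = [pick i | A i == u] /\
              omap tau [pick j | B j == u] = [pick j | B j == u].
    apply: om_inj; rewrite -!optv_comp; exact: (heq u (mem_enum _ u)).
  split; apply/permP.
    move=> i; have := (hp (A i)).1; rewrite (pick_inj iA (erefl (A i))) perm1.
    by case.
  move=> j; have := (hp (B j)).2; rewrite (pick_inj iB (erefl (B j))) perm1.
  by case.
split.
  move=> r0 hr0 p a b [hr iA iB cov]; split.
  - move=> u; rewrite /PhiF; congr (_ * _)%R; congr optv; apply: eq_pick => x;
      by rewrite -[in RHS](inj_eq (@perm_inj _ p)) permKV.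
  - split => //.
    + by move=> i j /perm_inj /iA.
    + by move=> i j /perm_inj /iB.
    move=> u; case: (cov (p u)) => [[i hi]|[j hj]]; [left; exists i|right; exists j];
      by rewrite ?hi ?hj permK.
  move=> /(inj_pair2_eq_dec _ PeanoNat.Nat.eq_dec _ _ _ _) [] /ffunP ha /ffunP hb.
  suff h1 : (p^-1)%g = 1%g by rewrite -[p]invgK h1 invg1.
  apply/permP => u; rewrite perm1; case: (cov u) => [[i <-]|[j <-]].
    by have := ha i; rewrite !ffunE.
  by have := hb j; rewrite !ffunE.
move=> r a b [hr iA iB cov] r1 r2 _ rs ks ls; rewrite /PhiSub.
apply/eq_in_map => u urs; rewrite /PhiF.
have eA : [pick i | (i \in ks) && (a i == u)] = [pick i | a i == u].
  apply: eq_pick => i /=; case: eqP => /= hi; rewrite ?andbF ?andbT // mem_pmap.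
  by apply/mapP; exists u => //; rewrite (pick_inj iA hi).
have eB : [pick j | (j \in ls) && (b j == u)] = [pick j | b j == u].
  apply: eq_pick => j /=; case: eqP => /= hj; rewrite ?andbF ?andbT // mem_pmap.
  by apply/mapP; exists u => //; rewrite (pick_inj iB hj).
rewrite eA eB; congr (_ * _)%R.
  case: pickP => //= i /eqP hi.
  have iks : i \in ks by rewrite mem_pmap; apply/mapP; exists u => //; rewrite (pick_inj iA hi).
  by rewrite (nth_map i) ?index_mem // nth_index.
case: pickP => //= j /eqP hj.
have jls : j \in ls by rewrite mem_pmap; apply/mapP; exists u => //; rewrite (pick_inj iB hj).
by rewrite (nth_map j) ?index_mem // nth_index.
Qed.
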